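(* Let $n\ge 1$, let $z_1,\dots,z_n$ be distinct integers none of which is $1$ or $-1$, and let $D=\{1,-1,z_1,\dots,z_n\}$. Then $diam(D)=2$ if $n=1$, $diam(D)=3$ if $n=2$, and $diam(D)=4$ if $n>2$.
   Context: A signed tree is a pair $(T,s)$ where $T$ is a finite tree and $s:E(T)\to\{+,-\}$. The signed degree $sdeg(v)$ of a vertex is the number of incident positive edges minus the number of incident negative edges. $(T,s)$ realizes (satisfies) a set $D$ of integers if $D=\{sdeg(v):v\in V(T)\}$. For a set $D$ containing $1$ or $-1$, $diam(D)=\min\{diam(T): \text{some signed tree }(T,s)\text{ realizes }D\}$, where $diam(T)$ is the diameter of the tree $T$. *)

(* Defs.v *)
From mathcomp Require Import all_boot all_order all_algebra.
Set Implicit Arguments. Unset Strict Implicit. Unset Printing Implicit Defensive.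
Import Order.TTheory GRing.Theory Num.Theory.

(* A signed tree is (T, s) with T a tree (connected, acyclic)
   and s a sign on edges (true = +, false = -), given as a symmetric function
   of the endpoints (only its values on edges matter). *)

Definition connected_graph (m : nat) (e : rel 'I_m) : Prop :=
  forall u v : 'I_m, connect e u v.

Definition acyclic_graph (m : nat) (e : rel 'I_m) : Prop :=
  forall p : seq 'I_m, uniq p -> 2 < size p -> ~~ cycle e p.

Definition is_tree (m : nat) (e : rel 'I_m) : Prop :=
  symmetric e /\ irreflexive e /\ connected_graph e /\ acyclic_graph e.

Definition signed_tree (m : nat) (e : rel 'I_m) (s : 'I_m -> 'I_m -> bool) : Prop :=
  is_tree e /\ (forall u v, s u v = s v u).

Definition sdeg (m : nat) (e : rel 'I_m) (s : 'I_m -> 'I_m -> bool) (v : 'I_m) : int :=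
  (\sum_(u : 'I_m | e v u) (if s v u then 1 else -1))%R.

Definition realizes (m : nat) (e : rel 'I_m) (s : 'I_m -> 'I_m -> bool) (D : seq int) : Prop :=
  forall d : int, d \in D <-> exists v : 'I_m, sdeg e s v = d.

(* graph distance: least k such that a walk with k edges joins u to v
   (in a connected graph on m vertices it is < m) *)
Definition walk_of_len (m : nat) (e : rel 'I_m) (u v : 'I_m) (k : nat) : bool :=
  [exists p : k.-tuple 'I_m, path e u p && (last u p == v)].

Definition dist (m : nat) (e : rel 'I_m) (u v : 'I_m) : nat :=
  find (walk_of_len e u v) (iota 0 m).

Definition diameter (m : nat) (e : rel 'I_m) : nat :=
  \max_(u : 'I_m) \max_(v : 'I_m) dist e u v.

Definition diam_of_set_is (D : seq int) (k : nat) : Prop :=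
  (exists (m : nat) (e : rel 'I_m) (s : 'I_m -> 'I_m -> bool),
      signed_tree e s /\ realizes e s D /\ diameter e = k) /\
  (forall (m : nat) (e : rel 'I_m) (s : 'I_m -> 'I_m -> bool),
      signed_tree e s -> realizes e s D -> k <= diameter e).

(* Main.v *)
Require Import Defs.
From mathcomp Require Import all_boot all_order all_algebra zify.
Set Implicit Arguments. Unset Strict Implicit. Unset Printing Implicit Defensive.
Import Order.TTheory GRing.Theory Num.Theory.


Section G.
Variables (m : nat) (e : rel 'I_m).
Hypotheses (esym : symmetric e) (eirr : irreflexive e) (eac : acyclic_graph e).

Lemma revP x p : path e x p ->
  [/\ path e (last x p) (rev (belast x p)),
      last (last x p) (rev (belast x p)) = x &
      last x p :: rev (belast x p) = rev (x :: p)].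
Proof.
move=> hp.
have H3 : last x p :: rev (belast x p) = rev (x :: p) by rewrite -rev_rcons -lastI.
split=> //.
- rewrite rev_path; rewrite (@eq_path _ _ e) // => a b; exact: esym.
- have -> : last (last x p) (rev (belast x p)) = last (last x p) (last x p :: rev (belast x p)) by [].
  by rewrite H3 rev_cons last_rcons.
Qed.

Lemma cycC x a b r : e x a -> e x b -> a != b -> path e a r -> last a r = b ->
  x \notin a :: r -> False.
Proof.
move=> hxa hxb hab hp hl hx.
case: (shortenP hp) hl => r' hp' hu' hsub hl.
have := eac (p := x :: a :: r').
have hun : uniq (x :: a :: r').
  rewrite cons_uniq hu' andbT.
  rewrite inE negb_or; apply/andP; split.
    by apply/eqP=> hxa'; move: hxa; rewrite hxa' eirr.
  apply/negP=> /hsub hr; move: hx; rewrite inE hr orbT //.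
case: r' hp' hu' hsub hl hun => [|c r'] hp' hu' hsub hl hun.
  by move: hab; rewrite /= -hl eqxx.
move=> /(_ hun isT); apply/negP; rewrite /cycle.
rewrite negbK rcons_path /= hxa /=.
move: hp' => /= ->; rewrite /=; move: hl => /= ->; by rewrite esym.
Qed.

Lemma uniqP x p q : path e x p -> uniq (x :: p) -> path e x q -> uniq (x :: q) ->
  last x p = last x q -> p = q.
Proof.
elim: p x q => [|a p IH] x q.
  case: q => // b q _ _ _ hu /= hl; move: hu => /= /andP[hx _].
  by move: hx; rewrite hl mem_last.
case: q => [|b q].
  move=> _ hu _ _ /= hl; move: hu => /= /andP[hx _].
  by move: hx; rewrite -hl mem_last.
move=> /= /andP[hxa hp] /andP[hxap hup] /andP[hxb hq] /andP[hxbq huq] hl.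
case: (eqVneq a b) => [hab | hab].
  by subst b; rewrite (IH a q).
exfalso.
case: (revP hq) => hq' hl' _.
apply: (@cycC x a b (p ++ rev (belast b q)) hxa hxb hab).
- by rewrite cat_path hp /= hl.
- by rewrite last_cat hl.
- rewrite -cat_cons mem_cat negb_or hxap /=.
  have : x \notin rev (last b q :: rev (belast b q)).
    by case: (revP hq) => _ _ ->; rewrite revK.
  by rewrite rev_cons revK mem_rcons inE negb_or mem_rev => /andP[_].
Qed.

Lemma dist_ge x p : path e x p -> uniq (x :: p) -> size p <= dist e x (last x p).
Proof.
move=> hp hu; set y := last x p.
have hw : forall k, k < size p -> ~~ walk_of_len e x y k.
  move=> k hk; apply/negP => /existsP [t /andP [ht /eqP hl]].
  case: (shortenP ht) hl => p' hp' hu' hsub hl.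
  have hs : size p' <= k.
    rewrite -(size_tuple t); apply: uniq_leq_size => //; by case/andP: hu'.
  have := uniqP hp' hu' hp hu hl => hpp; subst p'.
  by move: hk; rewrite ltnNge hs.
have hm : size p < m.
  have := max_card (mem (x :: p)); rewrite card_ord (card_uniqP hu) //.
rewrite /dist; case: (ltnP (find (walk_of_len e x y) (iota 0 m)) (size p)) => // hf.
have hh : has (walk_of_len e x y) (iota 0 m).
  rewrite has_find size_iota; exact: (leq_trans hf (ltnW hm)).
have hfm : find (walk_of_len e x y) (iota 0 m) < m.
  by move: hh; rewrite has_find size_iota.
have := nth_find 0 hh; rewrite nth_iota ?add0n //.
by rewrite (negbTE (hw _ hf)).
Qed.

Lemma diam_ge x p : path e x p -> uniq (x :: p) -> size p <= diameter e.
Proof.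
move=> hp hu; apply: leq_trans (dist_ge hp hu) _; rewrite /diameter.
have h1 := @leq_bigmax _ (fun v => dist e x v) (last x p).
have h2 := @leq_bigmax _ (fun u => \max_(v : 'I_m) dist e u v) x.
exact: leq_trans h1 h2.
Qed.

Lemma extP x p w : path e x p -> uniq (x :: p) -> e w x ->
  (forall a p1, p = a :: p1 -> w != a) -> path e w (x :: p) && uniq (w :: x :: p).
Proof.
move=> hp hu hwx hna.
rewrite /= hwx hp /=; move: (hu) => /= /andP[hxp hup]; rewrite hxp hup !andbT inE negb_or.
have -> : w != x by apply/eqP => h; move: hwx; rewrite h eirr.
apply/negP => hwp.
case/splitPr: hwp hp hu hna => r1 r2 hp hu hna.
have h1 : path e x (r1 ++ [:: w]).
  by move: hp; rewrite !cat_path /= => /and3P[-> -> _].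
have h2 : uniq (x :: r1 ++ [:: w]).
  move: hu; rewrite -!cat_cons !cat_uniq => /and3P[-> h _] /=; rewrite andbT.
  by rewrite orbF; move: h => /=; rewrite negb_or => /andP[].
have h3 : path e x [:: w] by rewrite /= esym hwx.
have h4 : uniq [:: x; w].
  by rewrite /= inE andbT; apply/eqP => h; move: hwx; rewrite h eirr.
have := uniqP h1 h2 h3 h4; rewrite last_cat /= => /(_ erefl).
case: r1 {h1 h2 hp hu} hna => [|c r1] hna.
  by move: (hna w r2 erefl); rewrite eqxx.
by move=> /(congr1 size); rewrite /= size_cat /= addnS.
Qed.

Definition internal v := exists a b, [/\ a != b, e v a & e v b].

Lemma ext2 x p : path e x p -> uniq (x :: p) -> internal x ->
  exists w, path e w (x :: p) && uniq (w :: x :: p).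
Proof.
move=> hp hu [a [b [hab hxa hxb]]].
case: p hp hu => [|c p] hp hu.
  by exists a; apply: extP => //; rewrite esym.
case: (eqVneq a c) => [hac | hac].
  exists b; apply: extP => //; first by rewrite esym.
  by move=> a0 p1 [<- _]; rewrite -hac eq_sym.
exists a; apply: extP => //; first by rewrite esym.
by move=> a0 p1 [<- _].
Qed.

Lemma pair_bound u p : internal u -> internal (last u p) -> path e u p -> uniq (u :: p) ->
  (size p).+2 <= diameter e.
Proof.
move=> iu iv hp hu.
case: (ext2 hp hu iu) => w1 /andP[hp1 hu1].
case: (revP hp1) => hq _ hrev.
have hlast : last w1 (u :: p) = last u p by [].
rewrite hlast in hq hrev.
have hu2 : uniq (last u p :: rev (belast w1 (u :: p))) by rewrite hrev rev_uniq.
case: (ext2 hq hu2 iv) => w2 /andP[hp2 hu2'].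
have := diam_ge hp2 hu2'; by rewrite /= size_rev /= size_belast.
Qed.

Lemma internalP (s : 'I_m -> 'I_m -> bool) v w : connected_graph e ->
  sdeg e s v != 1%R -> sdeg e s v != (-1)%R -> w != v -> internal v.
Proof.
move=> hc h1 h2 hwv.
have [a hva] : exists a, e v a.
  case/connectP: (hc v w) => p hp hl; case: p hp hl => [|a p] /=.
    by move=> _ hw; move: hwv; rewrite hw eqxx.
  by move=> /andP[h _] _; exists a.
case: (pickP [pred b | e v b && (b != a)]) => [b /andP[hb hba] | hno].
  by exists b, a; split.
have : sdeg e s v = (if s v a then 1 else -1)%R.
  rewrite /sdeg (big_pred1 a) // => u /=.
  case: (eqVneq u a) => [->|hua]; first by rewrite hva.
  by have := hno u; rewrite /= hua andbT.
by case: (s v a) => h; [move: h1 | move: h2]; rewrite h eqxx.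
Qed.

End G.

Lemma connect_upath m (e : rel 'I_m) u v : connect e u v ->
  exists p, [/\ path e u p, uniq (u :: p) & last u p = v].
Proof.
case/connectP => p hp ->; case: (shortenP hp) => p' hp' hu' _; by exists p'.
Qed.

Lemma LB m (e : rel 'I_m) s (z : seq int) : signed_tree e s ->
  realizes e s (1%R :: (-1)%R :: z) -> uniq z ->
  (forall x, x \in z -> x != 1%R /\ x != (-1)%R) -> 1 <= size z ->
  (if size z == 1 then 2 else if size z == 2 then 3 else 4) <= diameter e.
Proof.
case=> [[esym [eirr [hc hac]]] _] hr hu hz hn.
have [w hw] : exists w, sdeg e s w = 1%R by apply/hr; rewrite inE eqxx.
have hint : forall x, x \in z -> exists v, sdeg e s v = x /\ internal e v.
  move=> x hx; have [v hv] : exists v, sdeg e s v = x by apply/hr; rewrite !inE hx !orbT.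
  exists v; split => //; have [h1 h2] := hz x hx.
  apply: (internalP (s := s) (w := w)) => //; rewrite ?hv //.
  by apply/eqP => hwv; move: hw h1; rewrite hwv hv => ->; rewrite eqxx.
have hdist : forall x y v1 v2, x != y -> sdeg e s v1 = x -> sdeg e s v2 = y -> v1 != v2.
  by move=> x y v1 v2 hxy h1 h2; apply/eqP => h; move: hxy; rewrite -h1 -h2 h eqxx.
case: z hr hu hz hn hint => [|z1 [|z2 [|z3 zr]]] //= _ hu hz _ hint.
- have [v [_ [a [b [hab hva hvb]]]]] := hint z1 (mem_head _ _).
  have hp : path e a [:: v; b] by rewrite /= esym hva hvb.
  have hu' : uniq [:: a; v; b].
    rewrite /= !inE negb_or hab !andbT; apply/andP; split; apply/eqP => h.
      by move: hva; rewrite h eirr.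
    by move: hvb; rewrite h eirr.
  exact: (diam_ge esym eirr hac hp hu').
- have [v1 [h1 i1]] := hint z1 (mem_head _ _).
  have [v2 [h2 i2]] := hint z2 (ltac:(by rewrite !inE eqxx orbT)).
  have hne : v1 != v2 by apply: hdist h1 h2; move: hu; rewrite /= inE andbT.
  have [p [hp hup hl]] := connect_upath (hc v1 v2).
  have i2' : internal e (last v1 p) by rewrite hl.
  have := pair_bound esym eirr hac i1 i2' hp hup; clear i2'.
  case: p hp hup hl => [|c p] //= _ _ hl; first by move: hne; rewrite hl eqxx.
  by move=> h; apply: leq_trans h.
- have [v1 [h1 i1]] := hint z1 (mem_head _ _).
  have [v2 [h2 i2]] := hint z2 (ltac:(by rewrite !inE eqxx orbT)).
  have [v3 [h3 i3]] := hint z3 (ltac:(by rewrite !inE eqxx !orbT)).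
  move: hu => /and4P[hu1 hu2 hu3 _].
  move: hu1 hu2; rewrite !inE !negb_or => /and3P[n12 n13 _] /andP[n23 _].
  have d12 := hdist _ _ _ _ n12 h1 h2.
  have d13 := hdist _ _ _ _ n13 h1 h3.
  have d23 := hdist _ _ _ _ n23 h2 h3.
  have [a [b [ia ib hab hnab]]] : exists a b, [/\ internal e a, internal e b, a != b & ~~ e a b].
    case: (boolP (e v1 v2)) => e12; last by exists v1, v2.
    case: (boolP (e v2 v3)) => e23; last by exists v2, v3.
    case: (boolP (e v1 v3)) => e13; last by exists v1, v3.
    exfalso; have := hac [:: v1; v2; v3].
    rewrite /= !inE !negb_or d12 d13 d23 => /(_ isT isT); rewrite e12 e23 esym e13.
    by [].
  have [p [hp hup hl]] := connect_upath (hc a b).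
  have ib' : internal e (last a p) by rewrite hl.
  have := pair_bound esym eirr hac ia ib' hp hup; clear ib'.
  case: p hp hup hl => [|c [|c' p]] //= hp _ hl.
  + by move: hab; rewrite hl eqxx.
  + by move: hp hnab; rewrite -hl andbT => ->.
  + by move=> h; apply: leq_trans h.
Qed.

Lemma sum_pick (r : seq nat) (f : nat -> int) v : v \in r -> uniq r ->
  (\sum_(u <- r) (if u == v then f u else 0) = f v)%R.
Proof.
move=> hv hu; rewrite (bigD1_seq v) //= eqxx big1 ?addr0 // => u /negbTE ->; done.
Qed.

Lemma sum_cst (T : Type) (r : seq T) (c : int) : (\sum_(u <- r) c = c *+ size r)%R.
Proof. by elim: r => [|a r IH]; rewrite ?big_nil ?big_cons ?IH ?mulrS. Qed.

Section Cons.
Variables (d0 : int) (ds : seq int).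
Local Notation k := (size ds).
Definition tgt (j : nat) : int := if j == 0 then (d0 - (k%:Z))%R else (nth 0 ds j.-1 - 1)%R.
Definition Pn (t : int) : nat := (if (0 <= t)%R then absz t else 0).+1.
Definition Qn (t : int) : nat := (if (0 <= t)%R then 0 else absz t).+1.

Lemma PQ t : ((Pn t)%:Z - (Qn t)%:Z)%R = t.
Proof.
rewrite /Pn /Qn; case: ifP => h; lia.
Qed.

Definition blk j := nseq (Pn (tgt j)) (j, true) ++ nseq (Qn (tgt j)) (j, false).
Definition L := flatten [seq blk j | j <- iota 0 k.+1].
Definition N := size L.
Definition mm := (k + N).+1.
Definition x0 := (0%N, true).
Definition par v := if v <= k then 0 else (nth x0 L (v - k.+1)).1.
Definition sg v := if v <= k then true else (nth x0 L (v - k.+1)).2.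
Definition E u v := (u != v) && (par (maxn u v) == minn u v).
Definition S u v := sg (maxn u v).
Definition ee : rel 'I_mm := fun u v => E u v.
Definition ss : 'I_mm -> 'I_mm -> bool := fun u v => S u v.

Lemma own_le i : (nth x0 L i).1 <= k.
Proof.
case: (ltnP i N) => h; last by rewrite nth_default.
have := mem_nth x0 h; rewrite /L => /flattenP [b /mapP [j hj ->]].
rewrite mem_iota /= in hj.
by rewrite /blk mem_cat !mem_nseq => /orP [] /andP [_ /eqP ->].
Qed.

Lemma par_le v : par v <= k.
Proof. rewrite /par; case: ifP => // _; exact: own_le. Qed.

Lemma par_lt v : 0 < v -> par v < v.
Proof.
rewrite /par; case: ifP => // h _; have := own_le (v - k.+1); lia.
Qed.

Lemma ee_sym : symmetric ee.
Proof. by move=> u v; rewrite /ee /E maxnC minnC eq_sym. Qed.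

Lemma ee_irr : irreflexive ee.
Proof. by move=> u; rewrite /ee /E eqxx. Qed.

Lemma E_par u : 0 < u -> E u (par u).
Proof.
move=> h; have hp := par_lt h; rewrite /E.
rewrite (maxn_idPl (ltnW hp)) (minn_idPr (ltnW hp)) eqxx andbT.
by rewrite neq_ltn hp orbT.
Qed.

Lemma conn0 (u : 'I_mm) : connect ee u ord0.
Proof.
have [n] := ubnP (val u); elim: n u => // n IH u hu.
case: (posnP u) => h0.
  by have -> : u = ord0 by apply: val_inj.
have hpm : par u < mm := ltn_trans (par_lt h0) (ltn_ord u).
apply: connect_trans (connect1 _) (IH (Ordinal hpm) _).
  exact: E_par.
by rewrite /=; exact: leq_trans (par_lt h0) _.
Qed.

Lemma ee_conn : connected_graph ee.
Proof.
move=> u v; apply: connect_trans (conn0 u) _.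
by rewrite (sym_connect_sym ee_sym); exact: conn0.
Qed.

Lemma seq_max (s : seq 'I_mm) : s != [::] -> exists2 v, v \in s & forall u, u \in s -> val u <= val v.
Proof.
elim: s => // a s IH _; case: s IH => [|b s] IH.
  by exists a => [|u]; rewrite ?inE // => /eqP ->.
have [v hv hm] := IH isT.
case: (leqP (val a) (val v)) => h.
  exists v; first by rewrite inE hv orbT.
  by move=> u; rewrite inE => /orP [/eqP -> // | /hm].
exists a; first by rewrite inE eqxx.
move=> u; rewrite inE => /orP [/eqP -> // | /hm h']; exact: leq_trans h' (ltnW h).
Qed.

Lemma ee_acyc : acyclic_graph ee.
Proof.
move=> p hu hs; apply/negP => hc.
have [v hv hm] := seq_max (s := p) (ltac:(by case: p hs {hu hc})).
case: (rot_to hv) => i q hrot.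
have hu' : uniq (v :: q) by rewrite -hrot rot_uniq.
have hc' : cycle ee (v :: q) by rewrite -hrot rot_cycle.
have hs' : 2 < size (v :: q) by rewrite -hrot size_rot.
have hin : forall u, u \in q -> u \in p.
  by move=> u hq; rewrite -(mem_rot i) hrot inE hq orbT.
clear hrot; case: q hu' hc' hs' hin => [|a [|b q]] //= hu' hc' _ hin.
set l := last b q.
have hva : ee v a by move: hc'; rewrite /= => /andP[].
have hlv : ee l v.
  by move: hc' => /and3P[_ _]; rewrite rcons_path => /andP[_ h].
have hl : l \in b :: q by apply: mem_last.
move: hu' => /andP [hvn /andP [han _]].
have hav : val a < val v.
  have := hm a (hin a (mem_head _ _)); rewrite leq_eqVlt => /orP [/eqP h|//].
  by move: hvn; rewrite (val_inj h) inE eqxx.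
have hlv' : val l < val v.
  have := hm l (hin l (ltac:(by rewrite inE hl orbT))); rewrite leq_eqVlt => /orP [/eqP h|//].
  by move: hvn; rewrite -(val_inj h) inE hl orbT.
move: hva hlv; rewrite /ee /E (maxn_idPl (ltnW hav)) (minn_idPr (ltnW hav)).
rewrite (maxn_idPr (ltnW hlv')) (minn_idPl (ltnW hlv')) => /andP [_ /eqP h1] /andP [_ /eqP h2].
have hal : a = l by apply: val_inj; rewrite -h1 -h2.
by move: han; rewrite hal hl.
Qed.

Lemma ee_tree : signed_tree ee ss.
Proof.
split; last by move=> u v; rewrite /ss /S maxnC.
split; first exact: ee_sym.
split; first exact: ee_irr.
split; [exact: ee_conn | exact: ee_acyc].
Qed.

Definition F (v u : nat) : int := if E v u then (if S v u then 1 else -1)%R else 0%R.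

Lemma sum_nseq (T : Type) n (a : T) (f : T -> int) : (\sum_(x <- nseq n a) f x = f a *+ n)%R.
Proof. by elim: n => [|n IH]; rewrite ?big_nil ?big_cons ?IH ?mulrS. Qed.

Lemma sdegE (v : 'I_mm) : sdeg ee ss v =
  (\sum_(u <- iota 0 k.+1) F v u + \sum_(l <- iota 0 N) F v (k.+1 + l))%R.
Proof.
rewrite /sdeg big_mkcond /=.
transitivity (\sum_(i < mm) F v i)%R; first by apply: eq_bigr.
rewrite -(big_mkord xpredT (F v)) /index_iota subn0.
have -> : iota 0 mm = iota 0 k.+1 ++ map (addn k.+1) (iota 0 N).
  by rewrite -iotaDl addn0 -iotaD /mm addSn.
by rewrite big_cat big_map.
Qed.

Lemma leafsum v : v <= k -> (\sum_(l <- iota 0 N) F v (k.+1 + l) = tgt v)%R.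
Proof.
move=> hv.
pose G (x : nat * bool) : int := if x.1 == v then (if x.2 then 1 else -1)%R else 0%R.
transitivity (\sum_(x <- L) G x)%R.
  rewrite (big_nth x0) /index_iota subn0; apply: eq_bigr => l _.
  rewrite /F /E /S /par /sg /G.
  have h1 : maxn v (k.+1 + l) = k.+1 + l by apply/maxn_idPr; lia.
  have h2 : minn v (k.+1 + l) = v by apply/minn_idPl; lia.
  have h3 : (k.+1 + l <= k) = false by lia.
  have h4 : k.+1 + l - k.+1 = l by lia.
  have h0 : (v != k.+1 + l) = true by lia.
  by rewrite h1 h2 h3 h4 h0.
rewrite /L big_flatten big_map.
rewrite (eq_bigr (fun j => if j == v then tgt j else 0%R)); last first.
  move=> j _; rewrite big_cat !sum_nseq /G /=; case: eqP => _.
    by rewrite mulNrn !natz PQ.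
  by rewrite !mul0rn addr0.
by rewrite sum_pick ?mem_iota ?iota_uniq //; lia.
Qed.

Lemma sum_root : (\sum_(u <- iota 0 k.+1) F 0 u = k%:Z)%R.
Proof.
have -> : iota 0 k.+1 = 0 :: iota 1 k by [].
rewrite big_cons.
have -> : F 0 0 = 0%R by rewrite /F /E eqxx.
rewrite (eq_big_seq (fun _ => 1%R)) => [|u]; last first.
  rewrite mem_iota => hu; rewrite /F /E /S /sg /par max0n min0n.
  have -> : u <= k by lia.
  by have -> : (0 != u) = true by lia.
by rewrite sum_cst size_iota add0r natz.
Qed.

Lemma sum_a i : 0 < i <= k -> (\sum_(u <- iota 0 k.+1) F i u = 1)%R.
Proof.
move=> hi; have -> : iota 0 k.+1 = 0 :: iota 1 k by [].
rewrite big_cons big1_seq ?addr0.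
  rewrite /F /E /S /sg /par maxn0 minn0.
  have -> : i <= k by lia.
  by have -> : (i != 0) = true by lia.
move=> u /andP [_]; rewrite mem_iota => hu; rewrite /F /E.
have -> : par (maxn i u) = 0 by rewrite /par ifT //; lia.
have -> : (0 == minn i u) = false by lia.
by rewrite andbF.
Qed.

Lemma sum_leaf v : k < v -> (\sum_(u <- iota 0 k.+1) F v u = if sg v then 1 else -1)%R.
Proof.
move=> hv.
rewrite (eq_big_seq (fun u => if u == par v then (if sg v then 1 else -1) else 0)%R); last first.
  move=> u; rewrite mem_iota => hu; rewrite /F /E /S.
  have -> : maxn v u = v by apply/maxn_idPl; lia.
  have -> : minn v u = u by apply/minn_idPr; lia.
  have -> : (v != u) = true by lia.
  by rewrite eq_sym.
by rewrite sum_pick ?mem_iota ?iota_uniq //; have := par_le v; lia.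
Qed.

Lemma leaf2 v : k < v -> (\sum_(l <- iota 0 N) F v (k.+1 + l) = 0)%R.
Proof.
move=> hv; apply: big1 => l _; rewrite /F /E.
have hp := par_le (maxn v (k.+1 + l)).
have -> : (par (maxn v (k.+1 + l)) == minn v (k.+1 + l)) = false by lia.
by rewrite andbF.
Qed.

Lemma sdeg_val (v : 'I_mm) : sdeg ee ss v =
  if val v == 0 then d0 else if val v <= k then nth 0%R ds (val v).-1
  else (if sg v then 1 else -1)%R.
Proof.
rewrite sdegE; case: eqP => h0.
  by rewrite h0 sum_root leafsum // /tgt /= addrC subrK.
case: ifP => hk.
  rewrite sum_a ?leafsum //; last by rewrite hk andbT lt0n; apply/eqP.
  have h0' : (val v == 0) = false by apply/eqP.
  by rewrite /tgt h0' addrC subrK.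
have hv : k < v by rewrite ltnNge hk.
by rewrite sum_leaf // leaf2 // addr0.
Qed.

Lemma leaf_vertex (x : nat * bool) : x \in L ->
  exists v : 'I_mm, sdeg ee ss v = (if x.2 then 1 else -1)%R.
Proof.
move=> hx; set l := index x L.
have hl : l < N by rewrite index_mem.
have hv : k.+1 + l < mm by rewrite /mm; lia.
exists (Ordinal hv); rewrite sdeg_val /=.

have -> : (k.+1 + l <= k) = false by lia.
rewrite /sg.
have -> : (k.+1 + l <= k) = false by lia.
have -> : k.+1 + l - k.+1 = l by lia.
by rewrite nth_index.
Qed.

Lemma ee_real : realizes ee ss (1%R :: (-1)%R :: d0 :: ds).
Proof.
have hL : L = blk 0 ++ flatten [seq blk j | j <- iota 1 k] by [].
move=> d; split.
  rewrite !inE => /or4P [/eqP-> | /eqP-> | /eqP-> | hd].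
  - by apply: (leaf_vertex (x := (0, true))); rewrite hL /blk !mem_cat inE eqxx.
  - apply: (leaf_vertex (x := (0, false))); rewrite hL /blk !mem_cat.
    by rewrite [X in _ || X || _]mem_nseq eqxx /Qn orbT.
  - exists ord0; by rewrite sdeg_val.
  - set i := index d ds.
    have hik : i < k by rewrite index_mem.
    have hi : i.+1 < mm by rewrite /mm; lia.
    exists (Ordinal hi); rewrite sdeg_val /=.
    by rewrite hik nth_index.
case=> v <-; rewrite sdeg_val; case: ifP => h0; first by rewrite !inE eqxx !orbT.
case: ifP => h.
  by rewrite !inE mem_nth ?orbT //; case: (val v) h0 h.
by case: (sg v); rewrite !inE eqxx ?orbT.
Qed.

Lemma W0 (u : 'I_mm) : walk_of_len ee u u 0.
Proof. rewrite /walk_of_len; apply/existsP; exists [tuple]; by rewrite /= eqxx. Qed.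

Lemma WS (u v w : 'I_mm) j : ee u v -> walk_of_len ee v w j -> walk_of_len ee u w j.+1.
Proof.
move=> huv /existsP [t /andP [ht hl]]; rewrite /walk_of_len; apply/existsP; exists [tuple of v :: t].
by rewrite /= huv ht.
Qed.

Lemma WT (u v w : 'I_mm) j l : walk_of_len ee u v j -> walk_of_len ee v w l ->
  walk_of_len ee u w (j + l).
Proof.
elim: j u => [|j IH] u.
  move=> /existsP [t /andP [_ /eqP hl]]; move: hl; rewrite tuple0 /= => ->.
  by rewrite add0n.
move=> /existsP [t]; case: t / tupleP => a t /andP [/= /andP [hua ht] hl] hvw.
rewrite addSn; apply: (WS hua); apply: IH hvw; rewrite /walk_of_len; apply/existsP; exists t.
by rewrite ht.
Qed.

Lemma Wdist (u v : 'I_mm) j : walk_of_len ee u v j -> dist ee u v <= j.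
Proof.
move=> hw; rewrite /dist; case: (ltnP j mm) => hj.
  case: (leqP (find (walk_of_len ee u v) (iota 0 mm)) j) => // hf.
  by have := before_find 0 hf; rewrite nth_iota // add0n hw.
apply: leq_trans (find_size _ _) _; by rewrite size_iota.
Qed.

Lemma ee0 (b : 'I_mm) : 0 < b <= k -> ee ord0 b.
Proof.
move=> /andP [h1 h2]; rewrite /ee /E /= max0n min0n /par h2 eq_sym -lt0n h1.
by [].
Qed.

Lemma anchor (u : 'I_mm) : exists (a : 'I_mm) j, [/\ a <= k, j <= 1,
  walk_of_len ee u a j & walk_of_len ee a u j].
Proof.
case: (leqP u k) => hu.
  by exists u, 0; split => //; apply: W0.
have hp : par u < mm := leq_ltn_trans (par_le u) (ltn_trans hu (ltn_ord u)).
have he : ee u (Ordinal hp) by apply: E_par; exact: leq_ltn_trans (leq0n k) hu.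
exists (Ordinal hp), 1; split => //=; first exact: par_le.
  exact: WS he (W0 _).
by apply: WS (W0 _); rewrite ee_sym.
Qed.

Lemma anchor_pair (a b : 'I_mm) : a <= k -> b <= k ->
  exists j, j <= minn k 2 /\ walk_of_len ee a b j.
Proof.
move=> ha hb; case: (eqVneq a b) => [<-|hab].
  by exists 0; split => //; apply: W0.
have hab' : nat_of_ord a != nat_of_ord b := hab.
case: (posnP a) => ha0.
  have -> : a = ord0 by apply: val_inj.
  exists 1; split; first lia.
  by apply: WS (ee0 _) (W0 _); apply/andP; split => //; lia.
case: (posnP b) => hb0.
  have -> : b = ord0 by apply: val_inj.
  exists 1; split; first lia.
  by apply: WS (W0 _); rewrite ee_sym; apply: ee0; apply/andP; split => //; lia.
exists 2; split; first lia.
apply: (WS (v := ord0)); first by rewrite ee_sym; apply: ee0; apply/andP; split.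
by apply: WS (ee0 _) (W0 _); apply/andP; split.
Qed.

Lemma diam_le : diameter ee <= 2 + minn k 2.
Proof.
rewrite /diameter; apply/bigmax_leqP => u _; apply/bigmax_leqP => v _.
have [a [j1 [ha hj1 hua _]]] := anchor u.
have [b [j2 [hb hj2 _ hbv]]] := anchor v.
have [j [hj hab]] := anchor_pair ha hb.
apply: leq_trans (Wdist (WT (WT hua hab) hbv)) _; lia.
Qed.
End Cons.


Lemma main_gen (z : seq int) : 1 <= size z -> uniq z ->
  (forall x, x \in z -> x != 1%R /\ x != (-1)%R) ->
  diam_of_set_is (1%R :: (-1)%R :: z) (if size z == 1 then 2 else if size z == 2 then 3 else 4).
Proof.
case: z => [|d0 ds] // hn hu hz.
split; last by move=> m e s ht hr; exact: LB ht hr hu hz hn.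
exists (mm d0 ds), (@ee d0 ds), (@ss d0 ds); split; first exact: (@ee_tree d0 ds).
split; first exact: (@ee_real d0 ds).
apply/eqP; rewrite eqn_leq; apply/andP; split.
  apply: leq_trans (@diam_le d0 ds) _.
  by case: (ds) => [|? [|? ?]].
exact: LB (@ee_tree d0 ds) (@ee_real d0 ds) hu hz hn.
Qed.

Theorem mainTheorem7 (n : nat) (z : seq int) :
  (1 <= n)%N -> size z = n -> uniq z ->
  (forall x, x \in z -> x != 1%R /\ x != (-1)%R) ->
  let D := (1%R :: (-1)%R :: z) in
  (n = 1%N -> diam_of_set_is D 2) /\
  (n = 2%N -> diam_of_set_is D 3) /\
  ((2 < n)%N -> diam_of_set_is D 4).
Proof.
move=> hn hs hu hz D.
have H := main_gen (z := z) (ltac:(by rewrite hs)) hu hz.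
rewrite hs in H.
split; first by move=> h; move: H; rewrite h.
split; first by move=> h; move: H; rewrite h.
move=> h; move: H.
have -> : (n == 1) = false by lia.
by have -> : (n == 2) = false by lia.
Qed.
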